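(* Let $n\geq 3$ and $k\geq 2$ be integers and let $LCG(n,k)$ be the layer cycle graph with parameters $n,k$. Then the metric dimension of $LCG(n,k)$ is $\beta(LCG(n,k))=n(n-1)^{k-2}$.
   Context: All graphs are simple and connected; $d(u,v)$ is the shortest-path distance. For an ordered set $R=\{r_1,\dots,r_m\}$ of vertices, $r(u\,|\,R)=(d(u,r_1),\dots,d(u,r_m))$. $R$ is a resolving set of $G$ if distinct vertices of $G$ have distinct representations $r(\cdot|R)$; the metric dimension $\beta(G)$ is the minimum size of a resolving set. The layer cycle graph $LCG(n,k)$ ($n\geq 3$, $k\geq 2$) is constructed as follows. Its vertex set is partitioned into layers $U_1,\dots,U_k$. Layer $U_1$ is a cycle $C_n$ on vertices $1,\dots,n$. For $2\leq p\leq k$, layer $U_p$ consists of $n(n-1)^{p-2}$ vertex-disjoint cycles of length $n$, each with a distinguished vertex called its head vertex. Each vertex of $U_1$ is joined by an edge to the head vertex of exactly one cycle of $U_2$ (distinct vertices to distinct cycles). For $2\leq p<k$, each of the $n-1$ non-head vertices of each cycle of $U_p$ is joined by an edge to the head vertex of exactly one cycle of $U_{p+1}$, in such a way that every cycle of $U_{p+1}$ has its head joined to exactly one such vertex. There are no other edges. Thus $LCG(n,k)$ has $n+\sum_{p=2}^{k}n^2(n-1)^{p-2}$ vertices. *)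

(* Defs.v *)
From mathcomp Require Import all_boot.
Set Implicit Arguments. Unset Strict Implicit. Unset Printing Implicit Defensive.

Section Graph.
Variables (T : finType) (e : rel T).

Definition walk_len (m : nat) (u v : T) : bool :=
  [exists p : m.-tuple T, path e u p && (last u p == v)].

(* shortest-path distance: least m with a walk of length m from u to v.
   In a connected graph a shortest path has < #|T| edges, so searching
   m in [0, #|T|) is exact. *)
Definition dist (u v : T) : nat :=
  find (fun m => walk_len m u v) (iota 0 #|T|).

Definition resolving (R : {set T}) : bool :=
  [forall u, forall v, [forall r in R, dist u r == dist v r] ==> (u == v)].

Definition metric_dim : nat :=
  #|[arg min_(R < [set: T] | resolving R) #|R|]|.
End Graph.

(* A vertex of layer p (1 <= p <= k) is encoded as (q, t) with q = p-1 : 'I_k and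
   t : k.-tuple 'I_n, where only entries t_0 .. t_q are meaningful:
   - t_0 : position on the layer-1 cycle (p = 1), or the layer-1 vertex
     the ancestral U_2 cycle is attached to (p >= 2);
   - t_1 .. t_(q-1) : the non-head vertex (value in 1..n-1) of the
     ancestor cycle to which the next cycle is attached;
   - t_q : position in its own cycle (0 = head vertex when p >= 2).
   Entries beyond q are 0 (canonical form). *)
Definition ent n k (t : k.-tuple 'I_n) (i : nat) : nat := nth 0 [seq val j | j <- t] i.

Definition lcg_valid n k (x : 'I_k * k.-tuple 'I_n) : bool :=
  [forall i : 'I_k, ((x.1 < i) ==> (ent x.2 i == 0)) &&
                    (((0 < i) && (i < x.1)) ==> (ent x.2 i != 0))].

Definition lcg_vertex n k := {x : 'I_k * k.-tuple 'I_n | lcg_valid x}.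

Definition lcg_cyc n k (a b : 'I_k * k.-tuple 'I_n) : bool :=
  [&& a.1 == b.1,
      [forall i : 'I_k, (i < a.1) ==> (ent a.2 i == ent b.2 i)] &
      (ent b.2 a.1 == (ent a.2 a.1).+1 %% n) || (ent a.2 a.1 == (ent b.2 a.1).+1 %% n)].

(* edge from a (layer p, which is U_1 or a non-head vertex of a cycle of U_p)
   to the head of the cycle of U_(p+1) attached to it *)
Definition lcg_att n k (a b : 'I_k * k.-tuple 'I_n) : bool :=
  [&& b.1 == a.1.+1 :> nat,
      [forall i : 'I_k, (i <= a.1) ==> (ent a.2 i == ent b.2 i)],
      ent b.2 b.1 == 0 &
      (a.1 == 0 :> nat) || (ent a.2 a.1 != 0)].

Definition lcg_edge n k (a b : 'I_k * k.-tuple 'I_n) : bool :=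
  [|| lcg_cyc a b, lcg_att a b | lcg_att b a].

Definition lcg_rel n k : rel (lcg_vertex n k) :=
  fun x y => lcg_edge (val x) (val y).
Arguments lcg_rel n k : clear implicits.

(* Main.v *)
Require Import Defs.
From mathcomp Require Import all_boot.
From mathcomp Require Import zify.
Set Implicit Arguments. Unset Strict Implicit. Unset Printing Implicit Defensive.

Lemma find_iota_eq (p : pred nat) N m : m < N -> p m ->
  (forall i, i < m -> ~~ p i) -> find p (iota 0 N) = m.
Proof.
move=> mN pm bef.
have hm: has p (iota 0 N) by apply/hasP; exists m => //; rewrite mem_iota.
have := find_size p (iota 0 N); rewrite size_iota => fs.
case: (ltngtP (find p (iota 0 N)) m) => // h.
- have := nth_find 0 hm; rewrite nth_iota ?add0n; last by apply: (ltn_trans h).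
  by move=> /negPn; rewrite (bef _ h).
- have := before_find 0 h; rewrite nth_iota // add0n => /negbT.
  by rewrite pm.
Qed.

Section Generic.
Variables (T : finType) (e : rel T).

Lemma walk_of_seq (s : seq T) u v : path e u s -> last u s = v ->
  walk_len e (size s) u v.
Proof.
move=> hp hl; apply/existsP; exists (in_tuple s); by rewrite /= hp hl eqxx.
Qed.

Lemma seq_of_walk m u v : walk_len e m u v ->
  exists s, [/\ size s = m, path e u s & last u s = v].
Proof.
case/existsP => p /andP [hp /eqP hl]; exists (val p); by rewrite size_tuple.
Qed.

Lemma dist_charF (z : T) (F : T -> nat) :
  F z = 0 ->
  (forall u v, e u v -> F u <= (F v).+1) ->
  (forall u, u != z -> exists v, e u v /\ (F v).+1 = F u) ->
  forall u, dist e u z = F u.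
Proof.
move=> Fz Hl Hd.
have F0 : forall u, F u = 0 -> u = z.
  move=> u Fu; apply/eqP; apply/negPn/negP => /Hd [v [_ hv]]; by rewrite Fu in hv.
have Hw : forall m u, F u = m -> exists s, [/\ size s = m, path e u s & last u s = z].
  elim=> [|m IH] u Fu.
    by exists [::]; rewrite (F0 _ Fu).
  have uz : u != z by apply/eqP => uz; rewrite uz Fz in Fu.
  case: (Hd _ uz) => v [euv Fv]; rewrite Fu in Fv; case: Fv => Fv.
  case: (IH _ Fv) => s [s1 s2 s3]; exists (v :: s); by rewrite /= s1 euv s2 s3.
have Hlow : forall s u, path e u s -> F u <= size s + F (last u s).
  elim=> [|x s IH] u /=; first by [].
  case/andP => hux hp; have := IH _ hp; have := Hl _ _ hux; lia.
have Himg : forall m u, F u = m -> forall i, i <= m -> exists w, F w = i.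
  elim=> [|m IH] u Fu i hi.
    exists u; lia.
  case: (ltngtP i m.+1) => hi'.
  - have uz : u != z by apply/eqP => uz; rewrite uz Fz in Fu.
    case: (Hd _ uz) => v [euv Fv]; rewrite Fu in Fv; case: Fv => Fv.
    exact: (IH _ Fv i).
  - lia.
  - by exists u; rewrite Fu hi'.
move=> u; rewrite /dist; apply: find_iota_eq.
- have : (F u).+1 <= #|T|.
    rewrite cardT -(size_map F).
    have -> : (F u).+1 = size (iota 0 (F u).+1) by rewrite size_iota.
    apply: uniq_leq_size; first exact: iota_uniq.
    move=> i; rewrite mem_iota add0n => /= hi.
    case: (Himg _ _ (erefl (F u)) i) => [|w Fw]; first lia.
    by rewrite -Fw; apply: map_f; rewrite mem_enum.
  by [].
- case: (Hw _ _ (erefl (F u))) => s [s1 s2 s3]; rewrite -s1; exact: walk_of_seq.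
- move=> i hi; apply/negP => /seq_of_walk [s [s1 s2 s3]].
  have := Hlow _ _ s2; rewrite s3 Fz s1; lia.
Qed.

Hypothesis esym : symmetric e.

Lemma walk_sym m u v : walk_len e m u v -> walk_len e m v u.
Proof.
case/seq_of_walk => s [s1 s2 s3].
rewrite -s1 -(size_belast u s) -size_rev; apply: walk_of_seq.
- rewrite -s3 rev_path (@eq_path _ (fun z => e^~ z) e) // => x y /=; exact: esym.
- move: s3; case: s {s1 s2} => [|x s] /=; first by move=> ->.
  by rewrite rev_cons last_rcons.
Qed.

Lemma dist_sym u v : dist e u v = dist e v u.
Proof.
rewrite /dist; apply: eq_find => m /=.
by apply/idP/idP; apply: walk_sym.
Qed.

End Generic.


Section Cyc.
Variable n : nat.
Hypothesis n3 : 2 < n.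

Definition cd x y := minn (x - y + (y - x)) (n - (x - y + (y - x))).
Definition dh x := cd x 0.
Definition adj x x' := x' = x.+1 %% n \/ x = x'.+1 %% n.

Lemma modS x : x < n -> x.+1 %% n = if x.+1 == n then 0 else x.+1.
Proof. move=> h; case: eqP => e; first by rewrite e modnn. rewrite modn_small //; lia. Qed.

Lemma adj_cases x x' : x < n -> x' < n -> adj x x' ->
  x' = x.+1 \/ (x = n.-1 /\ x' = 0) \/ x = x'.+1 \/ (x' = n.-1 /\ x = 0).
Proof.
move=> hx hx' [] ->; rewrite modS //; case: eqP => e; lia.
Qed.

Lemma cd_step x x' y : x < n -> x' < n -> y < n -> adj x x' -> cd x' y <= (cd x y).+1.
Proof. move=> hx hx' hy /adj_cases => /(_ hx hx'); rewrite /cd; lia. Qed.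

Lemma cd_desc x y : x < n -> y < n -> x != y ->
  exists x', [/\ x' < n, adj x x' & (cd x' y).+1 = cd x y].
Proof.
move=> hx hy /eqP hxy.
have Hu : adj x (if x.+1 == n then 0 else x.+1) by left; rewrite modS.
have Hd : adj x (if x == 0 then n.-1 else x.-1).
  right; case: eqP => e; first by rewrite e prednK ?modnn //; lia.
  by rewrite prednK ?modn_small //; lia.
have : (cd (if x.+1 == n then 0 else x.+1) y).+1 = cd x y \/
       (cd (if x == 0 then n.-1 else x.-1) y).+1 = cd x y.
  rewrite /cd; case: eqP => e1; case: eqP => e2; lia.
case=> h; [exists (if x.+1 == n then 0 else x.+1) | exists (if x == 0 then n.-1 else x.-1)];
  split => //; case: eqP => ?; lia.
Qed.

Lemma cd_lt x y : cd x y < n. Proof. rewrite /cd; lia. Qed.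
Lemma cd_tri0 x y : x < n -> y < n -> cd x y <= dh x + dh y.
Proof. rewrite /dh /cd; lia. Qed.
Lemma cd_eq0 x y : x < n -> y < n -> cd x y = 0 -> x = y.
Proof. rewrite /cd; lia. Qed.
Lemma cd_xx x : cd x x = 0. Proof. rewrite /cd; lia. Qed.
Lemma cd_sym x y : cd x y = cd y x. Proof. rewrite /cd; lia. Qed.
Lemma cd0x x : cd 0 x = dh x. Proof. rewrite /dh /cd; lia. Qed.
Lemma cyc_res a b : a < n -> b < n -> cd a 0 = cd b 0 -> cd a 1 = cd b 1 -> a = b.
Proof. rewrite /cd; lia. Qed.
Lemma dh1 : dh 1 = 1. Proof. rewrite /dh /cd; lia. Qed.
Lemma dhn1 : dh n.-1 = 1. Proof. rewrite /dh /cd; lia. Qed.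
Lemma dh_pos x : x < n -> 0 < x -> 0 < dh x. Proof. rewrite /dh /cd; lia. Qed.
Lemma dh0 : dh 0 = 0. Proof. rewrite /dh /cd; lia. Qed.

End Cyc.


Section LCG.
Variables n k : nat.
Hypothesis n3 : 2 < n.
Hypothesis k2 : 1 < k.

Local Notation V := (lcg_vertex n k).
Local Notation E := (lcg_rel n k).

Lemma n0 : 0 < n. Proof. lia. Qed.
Lemma k0 : 0 < k. Proof. lia. Qed.
Definition oI (x : nat) : 'I_n := Ordinal (ltn_pmod x n0).
Definition oK (x : nat) : 'I_k := Ordinal (ltn_pmod x k0).

Definition lay (w : V) : nat := (val w).1.
Definition pos (w : V) (i : nat) : nat := ent (val w).2 i.

Lemma ent_lt (t : k.-tuple 'I_n) i : ent t i < n.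
Proof.
rewrite /ent; case: (ltnP i (size [seq val j | j <- t])) => h.
  by have /mapP [x _ ->] := mem_nth 0 h; exact: ltn_ord.
by rewrite nth_default //; exact: n0.
Qed.

Lemma ent_ge (t : k.-tuple 'I_n) i : k <= i -> ent t i = 0.
Proof. by move=> h; rewrite /ent nth_default // size_map size_tuple. Qed.

Lemma lay_lt w : lay w < k. Proof. exact: ltn_ord. Qed.
Lemma pos_lt w i : pos w i < n. Proof. exact: ent_lt. Qed.

Lemma pos_hi w i : lay w < i -> pos w i = 0.
Proof.
move=> h; case: (ltnP i k) => ik; last exact: ent_ge.
have /forallP v := valP w.
have /andP [/implyP H _] := v (Ordinal ik).
by apply/eqP; apply: H.
Qed.

Lemma pos_nz w i : 0 < i < lay w -> pos w i != 0.
Proof.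
move=> h; have ik : i < k by have := lay_lt w; lia.
have /forallP v := valP w.
have /andP [_ /implyP H] := v (Ordinal ik).
by apply: H.
Qed.

Lemma V_ext w w' : lay w = lay w' -> (forall i, pos w i = pos w' i) -> w = w'.
Proof.
case: w w' => [[q t] h] [[q' t'] h'] /= hq hp; apply: val_inj => /=.
have -> : q = q' by apply: val_inj.
have -> : t = t'; last by [].
apply: val_inj; apply: (inj_map val_inj); apply: (@eq_from_nth _ 0).
  by rewrite !size_map !size_tuple.
by move=> i _; exact: (hp i).
Qed.

Definition mkP (q : nat) (f : nat -> nat) : 'I_k * k.-tuple 'I_n :=
  (oK q, [tuple oI (f i) | i < k]).

Lemma ent_mk (f : nat -> nat) i :
  ent [tuple oI (f i) | i < k] i = if i < k then f i %% n else 0.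
Proof.
case: ifP => ik; last by apply: ent_ge; lia.
rewrite /ent (nth_map (oI 0)); last by rewrite size_tuple.
by rewrite -[i]/(nat_of_ord (Ordinal ik)) nth_mktuple.
Qed.

Definition vfun q (f : nat -> nat) :=
  [/\ q < k, forall i, f i < n, forall i, q < i -> f i = 0
    & forall i, 0 < i < q -> f i != 0].

Lemma mkP_valid q f : vfun q f -> lcg_valid (mkP q f).
Proof.
case=> qk fn fhi fnz; apply/forallP => i /=.
rewrite ent_mk ltn_ord modn_small // modn_small //.
apply/andP; split; apply/implyP => h.
  by rewrite fhi.
exact: fnz.
Qed.

Lemma exV q f : vfun q f -> exists w : V, lay w = q /\ forall i, pos w i = f i.
Proof.
move=> hv; exists (exist _ (mkP q f) (mkP_valid hv)).
case: hv => qk fn fhi fnz; split.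
  by rewrite /lay /= modn_small.
move=> i; rewrite /pos /= ent_mk; case: ifP => ik; first by rewrite modn_small.
by rewrite fhi //; lia.
Qed.

Lemma insubd_mkP (w0 : V) q f : vfun q f ->
  lay (insubd w0 (mkP q f)) = q /\ forall i, pos (insubd w0 (mkP q f)) i = f i.
Proof.
move=> hv; have hv' := mkP_valid hv.
rewrite /lay /pos insubdK //.
case: hv => qk fn fhi fnz; split.
  by rewrite /= modn_small.
move=> i; rewrite /= ent_mk; case: ifP => ik; first by rewrite modn_small.
by rewrite fhi //; lia.
Qed.

Lemma vfun_pos w : vfun (lay w) (pos w).
Proof. split; [exact: lay_lt | exact: pos_lt | exact: pos_hi | exact: pos_nz]. Qed.

Lemma cyc_elim a b : lcg_cyc (val a) (val b) ->
  [/\ lay a = lay b, forall i, i != lay a -> pos a i = pos b i &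
      pos b (lay a) = (pos a (lay a)).+1 %% n \/ pos a (lay a) = (pos b (lay a)).+1 %% n].
Proof.
case/and3P => /eqP hq0 /forallP hp ho.
have hq : lay a = lay b by rewrite /lay hq0.
split => //.
- move=> i hi; case: (ltngtP i (lay a)) => h.
  + have ik : i < k by have := lay_lt a; lia.
    by have /implyP /(_ h) /eqP := hp (Ordinal ik).
  + by rewrite !pos_hi //; rewrite -?hq; lia.
  + by rewrite h eqxx in hi.
- by case/orP: ho => /eqP; auto.
Qed.

Lemma cyc_intro a b : lay a = lay b -> (forall i, i != lay a -> pos a i = pos b i) ->
  pos b (lay a) = (pos a (lay a)).+1 %% n \/ pos a (lay a) = (pos b (lay a)).+1 %% n ->
  lcg_cyc (val a) (val b).
Proof.
move=> hq hp ho; apply/and3P; split.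
- by apply/eqP; apply: val_inj.
- apply/forallP => i; apply/implyP => h; apply/eqP; apply: hp; rewrite /lay; lia.
- by case: ho => h; apply/orP; [left|right]; apply/eqP.
Qed.

Lemma att_elim a b : lcg_att (val a) (val b) ->
  [/\ lay b = (lay a).+1, forall i, pos a i = pos b i & lay a = 0 \/ pos a (lay a) != 0].
Proof.
case/and4P => /eqP hq0 /forallP hp /eqP h0 ho.
have hq : lay b = (lay a).+1 := hq0.
split => //.
- move=> i; case: (leqP i (lay a)) => h.
  + have ik : i < k by have := lay_lt a; lia.
    by have /implyP /(_ h) /eqP := hp (Ordinal ik).
  + case: (ltnP (lay b) i) => h2; first by rewrite !pos_hi //; lia.
    have -> : i = lay b by lia.
    by rewrite [pos b _]h0 pos_hi // hq.
- by case/orP: ho => [/eqP|]; auto.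
Qed.

Lemma att_intro a b : lay b = (lay a).+1 -> (forall i, pos a i = pos b i) ->
  lay a = 0 \/ pos a (lay a) != 0 -> lcg_att (val a) (val b).
Proof.
move=> hq hp ho; apply/and4P; split.
- by apply/eqP.
- by apply/forallP => i; apply/implyP => _; apply/eqP; apply: hp.
- apply/eqP; have h := hp (lay b); rewrite pos_hi in h; first exact: (esym h).
  by rewrite hq.
- by case: ho => h; apply/orP; [left; apply/eqP | right].
Qed.

Lemma cyc_sym (a b : V) : lcg_cyc (val a) (val b) -> lcg_cyc (val b) (val a).
Proof.
case/cyc_elim => hq hp ho; apply: cyc_intro => //.
- by move=> i; rewrite -hq => /hp ->.
- by rewrite -hq; case: ho; auto.
Qed.

Lemma E_sym : symmetric E.
Proof.
move=> a b; rewrite /E /lcg_edge.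
apply/idP/idP => /or3P [h|h|h]; apply/or3P; try by [constructor 2| constructor 3].
- by constructor 1; apply: cyc_sym.
- by constructor 1; apply: cyc_sym.
Qed.


Definition S (t : nat -> nat) (a b : nat) := \sum_(a.+1 <= i < b.+1) (dh n (t i)).+1.

Lemma S_nil t a : S t a a = 0.
Proof. by rewrite /S big_geq. Qed.
Lemma S_recr t a b : a <= b -> S t a b.+1 = S t a b + (dh n (t b.+1)).+1.
Proof. by move=> h; rewrite /S big_nat_recr. Qed.
Lemma S_recl t a b : a < b -> S t a b = (dh n (t a.+1)).+1 + S t a.+1 b.
Proof. by move=> h; rewrite /S big_ltn. Qed.
Lemma S_ext t t' a b : (forall i, a < i <= b -> t i = t' i) -> S t a b = S t' a b.
Proof. move=> h; rewrite /S; apply: eq_big_nat => i hi; rewrite h //; lia. Qed.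
Lemma S_split t a b d : a <= b -> b <= d -> S t a d = S t a b + S t b d.
Proof. move=> h1 h2; rewrite /S (@big_cat_nat _ _ _ b.+1) //. Qed.

Definition jf (c : nat -> nat) (q : nat) (t : nat -> nat) :=
  find (fun i => (i == q) || (t i != c i)) (iota 0 q.+1).

Lemma jf_eq c q t m : m <= q -> (forall i, i < m -> t i = c i) ->
  (m < q -> t m != c m) -> jf c q t = m.
Proof.
move=> hm hb hl; apply: find_iota_eq; first lia.
- rewrite /=; case: (ltngtP m q) => h //=.
  + exact: hl.
  + lia.
- move=> i hi /=; rewrite negb_or negbK (hb _ hi) eqxx andbT; apply/eqP; lia.
Qed.

Lemma jf_spec c q t : [/\ jf c q t <= q, forall i, i < jf c q t -> t i = c i &
  (jf c q t < q -> t (jf c q t) != c (jf c q t))].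
Proof.
set p := (fun i => (i == q) || (t i != c i)).
have hs : has p (iota 0 q.+1) by apply/hasP; exists q; rewrite ?mem_iota /p ?eqxx //; lia.
have hlt : jf c q t < q.+1 by move: hs; rewrite has_find size_iota.
split.
- by [].
- move=> i hi; have := before_find 0 hi; rewrite nth_iota; last by lia.
  by rewrite /p add0n => /negbT; rewrite negb_or negbK => /andP [_ /eqP].
- move=> hq; have := nth_find 0 hs.
  have ej : find p (iota 0 q.+1) = jf c q t := erefl.
  rewrite ej nth_iota // add0n /p => /orP [/eqP h|//].
  lia.
Qed.

Definition Fq (c : nat -> nat) (q : nat) (t : nat -> nat) :=
  S t (jf c q t) q + S c (jf c q t) k.-1 + cd n (t (jf c q t)) (c (jf c q t)).

Section Dist.
Variable z : V.
Hypothesis hz : lay z = k.-1.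
Hypothesis hz1 : pos z k.-1 != 0.
Local Notation c := (pos z).

Definition F (w : V) := Fq c (lay w) (pos w).

Lemma Fq_ext q t t' : (forall i, t i = t' i) -> Fq c q t = Fq c q t'.
Proof.
move=> h; have ej : jf c q t = jf c q t' by apply: eq_find => i /=; rewrite h.
by rewrite /Fq ej (@S_ext t t') ?h.
Qed.

Lemma Fz : F z = 0.
Proof.
rewrite /F /Fq; have -> : jf c (lay z) (pos z) = k.-1 by apply: jf_eq; rewrite ?hz //; lia.
by rewrite hz !S_nil cd_xx.
Qed.

Lemma Fcyc (a b : V) : lcg_cyc (val a) (val b) ->
  F a + (if jf c (lay a) (pos a) < lay a then dh n (pos b (lay a)) else cd n (pos b (lay a)) (c (lay a))) =
  F b + (if jf c (lay a) (pos a) < lay a then dh n (pos a (lay a)) else cd n (pos a (lay a)) (c (lay a))).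
Proof.
case/cyc_elim => hq hp ho.
have [j1 j2 j3] := jf_spec c (lay a) (pos a).
set j := jf c (lay a) (pos a) in j1 j2 j3 *.
have hjb : jf c (lay b) (pos b) = j.
  rewrite -hq; apply: jf_eq => //.
  - move=> i hi; rewrite -hp; [exact: j2 | apply/eqP; lia].
  - move=> hjq; rewrite -hp; [exact: j3 | apply/eqP; lia].
rewrite /F /Fq hjb -hq -/j.
case: ltnP => hjq.
- have hpj : pos a j = pos b j by apply: hp; apply/eqP; lia.
  rewrite hpj.
  have hp' : forall i, i != lay a -> pos a i = pos b i := hp.
  move: hjq hp'; case Eq: (lay a) => [|q'] hjq hp'; first lia.
  rewrite !S_recr; try lia.
  rewrite (@S_ext (pos a) (pos b) j q'); last by move=> i hi; apply: hp'; apply/eqP; lia.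
  lia.
- have ej : j = lay a by lia.
  rewrite ej !S_nil; lia.
Qed.

Lemma Fatt_up (a b : V) : lcg_att (val a) (val b) ->
  ~~ ((jf c (lay a) (pos a) == lay a) && (pos a (lay a) == c (lay a))) -> F b = (F a).+1.
Proof.
case/att_elim => hq hp ho hn.
have [j1 j2 j3] := jf_spec c (lay a) (pos a).
set j := jf c (lay a) (pos a) in j1 j2 j3 hn *.
rewrite /F hq (@Fq_ext _ (pos b) (pos a)) // /Fq.
have hja : jf c (lay a).+1 (pos a) = j.
  apply: jf_eq; first lia.
  - exact: j2.
  - move=> _; case: (ltnP j (lay a)) => h; first exact: j3.
    have ej : j = lay a by lia.
    by move: hn; rewrite ej eqxx.
rewrite hja S_recr // (pos_hi (w := a)) // dh0 -/j; lia.
Qed.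

Lemma Fatt_down (a b : V) : lcg_att (val a) (val b) ->
  jf c (lay a) (pos a) = lay a -> pos a (lay a) = c (lay a) -> (F b).+1 = F a.
Proof.
case/att_elim => hq hp ho hj hc.
have [j1 j2 j3] := jf_spec c (lay a) (pos a).
rewrite /F hq (@Fq_ext _ (pos b) (pos a)) // /Fq.
have hja : jf c (lay a).+1 (pos a) = (lay a).+1.
  apply: jf_eq => //; last by rewrite ltnn.
  move=> i hi; case: (ltngtP i (lay a)) => h.
  - by apply: j2; rewrite hj.
  - lia.
  - by rewrite h.
have hk : (lay a).+1 <= k.-1 by have := lay_lt b; lia.
have hk2 : lay a < k.-1 by lia.
rewrite hja hj !S_nil hc cd_xx // (@pos_hi a (lay a).+1) // cd0x // (S_recl c hk2); lia.
Qed.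

Lemma F_lip u v : E u v -> F u <= (F v).+1.
Proof.
rewrite /E /lcg_rel /lcg_edge => /or3P [h|h|h].
- have h' := cyc_sym h; have := Fcyc h'.
  case/cyc_elim: h' => hq hp ho.
  have := cd_step n3 (pos_lt v (lay v)) (pos_lt u (lay v)) (pos_lt z (lay v)) ho.
  have := cd_step n3 (pos_lt v (lay v)) (pos_lt u (lay v)) n0 ho.
  rewrite /dh; case: ifP => _; lia.
- case E1: ((jf c (lay u) (pos u) == lay u) && (pos u (lay u) == c (lay u))).
  + case/andP: E1 => /eqP e1 /eqP e2; have := Fatt_down h e1 e2; lia.
  + have := Fatt_up h (negbT E1); lia.
- case E1: ((jf c (lay v) (pos v) == lay v) && (pos v (lay v) == c (lay v))).
  + case/andP: E1 => /eqP e1 /eqP e2; have := Fatt_down h e1 e2; lia.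
  + have := Fatt_up h (negbT E1); lia.
Qed.

Lemma F_desc u : u != z -> exists v, E u v /\ (F v).+1 = F u.
Proof.
move=> uz.
have [j1 j2 j3] := jf_spec c (lay u) (pos u).
set j := jf c (lay u) (pos u) in j1 j2 j3 *.
have hvu := vfun_pos u; case: hvu => hqk htn thi tnz.
have mkcyc : forall x', x' < n -> adj n (pos u (lay u)) x' ->
    exists v, lcg_cyc (val u) (val v) /\ pos v (lay u) = x'.
  move=> x' hx' ha.
  have hvf : vfun (lay u) (fun i => if i == lay u then x' else pos u i).
    split => //.
    - by move=> i; case: eqP.
    - move=> i hi; case: (eqVneq i (lay u)) => e; [by rewrite e ltnn in hi | exact: thi].
    - move=> i hi; case: (eqVneq i (lay u)) => e; [by rewrite e ltnn andbF in hi | exact: tnz].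
  have [v [hv1 hv2]] := exV hvf.
  exists v; split; last by rewrite hv2 eqxx.
  apply: cyc_intro.
  - by rewrite hv1.
  - by move=> i hi; rewrite hv2 (negbTE hi).
  - by rewrite hv2 eqxx.
case: (ltnP j (lay u)) => hjq.
- case: (eqVneq (pos u (lay u)) 0) => h0.
  + have hvf : vfun (lay u).-1 (pos u).
      split => //; first lia.
      - move=> i hi; case: (eqVneq i (lay u)) => e; first by rewrite e.
        apply: thi; lia.
      - move=> i hi; apply: tnz; lia.
    have [v [hv1 hv2]] := exV hvf.
    have hatt : lcg_att (val v) (val u).
      apply: att_intro.
      - rewrite hv1; lia.
      - by move=> i; rewrite hv2.
      - rewrite hv1 hv2; case: (posnP (lay u).-1) => h; [by left | right; apply: tnz; lia].
    exists v; split; first by rewrite /E /lcg_rel /lcg_edge hatt !orbT.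
    rewrite (Fatt_up hatt) //.
    have ejv : jf c (lay v) (pos v) = j.
      rewrite hv1; apply: jf_eq; first lia.
      - by move=> i hi; rewrite hv2; apply: j2.
      - by move=> hh; rewrite hv2; apply: j3; lia.
    rewrite ejv hv1 hv2; apply/negP => /andP [/eqP e1 /eqP e2].
    by move: (j3 hjq); rewrite e1 e2 eqxx.
  + have [x' [hx' ha hcd]] := cd_desc n3 (pos_lt u (lay u)) n0 h0.
    have [v [hc hv]] := mkcyc x' hx' ha.
    exists v; split; first by rewrite /E /lcg_rel /lcg_edge hc.
    have := Fcyc hc; rewrite -/j hjq hv /dh; lia.
- have ej : j = lay u by lia.
  case: (eqVneq (pos u (lay u)) (c (lay u))) => h0.
  + case: (eqVneq (lay u) k.-1) => hk.
    * exfalso; move/negP: uz; apply; apply/eqP; apply: V_ext; first by rewrite hk hz.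
      move=> i; case: (ltngtP i (lay u)) => h.
      -- by apply: j2; rewrite ej.
      -- rewrite thi // pos_hi //; lia.
      -- by rewrite h.
    * have hvf : vfun (lay u).+1 (pos u).
        split => //.
        - have := lay_lt z; lia.
        - move=> i hi; apply: thi; lia.
        - move=> i hi; case: (ltngtP i (lay u)) => e.
          + apply: tnz; lia.
          + lia.
          + rewrite e h0; apply: pos_nz; have := lay_lt z; lia.
      have [v [hv1 hv2]] := exV hvf.
      have hatt : lcg_att (val u) (val v).
        apply: att_intro.
        - exact: hv1.
        - by move=> i; rewrite hv2.
        - case: (eqVneq (lay u) 0) => h; [by left | right; rewrite h0; apply: pos_nz; have := lay_lt z; lia].
      exists v; split; first by rewrite /E /lcg_rel /lcg_edge hatt orbT.
      exact: Fatt_down hatt ej h0.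
  + have [x' [hx' ha hcd]] := cd_desc n3 (pos_lt u (lay u)) (pos_lt z (lay u)) h0.
    have [v [hc hv]] := mkcyc x' hx' ha.
    exists v; split; first by rewrite /E /lcg_rel /lcg_edge hc.
    have := Fcyc hc; rewrite -/j ltnNge hjq /= hv; lia.
Qed.

Lemma distF u : dist E u z = F u.
Proof. exact: (dist_charF Fz F_lip F_desc). Qed.

End Dist.

Lemma Fq_cext c c' q t : (forall i, c i = c' i) -> Fq c q t = Fq c' q t.
Proof.
move=> h; have ej : jf c q t = jf c' q t by apply: eq_find => i /=; rewrite h.
by rewrite /Fq ej (@S_ext c c') ?h.
Qed.

Lemma Fq_probe c q t i : i <= q -> (forall m, m < i -> t m = c m) -> t i != c i ->
  Fq c q t = S t i q + S c i k.-1 + cd n (t i) (c i).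
Proof.
move=> hi ha hne; rewrite /Fq; have -> : jf c q t = i by apply: jf_eq => // _.
by [].
Qed.

Lemma S_ge t i j : i < j -> (dh n (t j)).+1 <= S t i j.
Proof. case: j => [|j] h //; rewrite S_recr //; lia. Qed.

Lemma Fq_probe_le c q t i : i <= q -> q <= k.-1 -> (forall m, m <= i -> t m = c m) ->
  (forall m, c m < n) -> (forall m, t m < n) -> Fq c q t <= S t i q + S c i k.-1.
Proof.
move=> hi hq ha hc ht.
have [j1 j2 j3] := jf_spec c q t.
rewrite /Fq; set j := jf c q t in j1 j2 j3 *.
have hij : i <= j.
  case: (leqP i j) => // h; exfalso.
  have := j3 (leq_trans h hi); by rewrite ha ?eqxx //; lia.
rewrite (S_split t hij j1) (S_split c hij (leq_trans j1 hq)).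
case: (ltngtP i j) => e.
- have := S_ge t e; have := S_ge c e; have := cd_tri0 n3 (ht j) (hc j); lia.
- lia.
- by rewrite -e !S_nil ha // cd_xx //; lia.
Qed.

Definition Lm : {set V} := [set w | (lay w == k.-1) && (pos w k.-1 == 1)].

Lemma Lm_ok r : r \in Lm -> lay r = k.-1 /\ pos r k.-1 != 0.
Proof. by rewrite inE => /andP [/eqP -> /eqP ->]. Qed.

Lemma probe u0 i x : i <= lay u0 -> x < n -> (i < k.-1 \/ x <= 1) ->
  exists r, r \in Lm /\ exists K, forall w, i <= lay w ->
    (forall m, m < i -> pos w m = pos u0 m) ->
    (pos w i != x -> F r w = S (pos w) i (lay w) + K + cd n (pos w i) x) /\
    (pos w i = x -> F r w <= S (pos w) i (lay w) + K).
Proof.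
move=> hi hx hp; have hik : i <= k.-1 by have := lay_lt u0; lia.
case: (boolP ((x == 0) && (0 < i))) => hb.
- case/andP: hb => /eqP ex hi0; subst x.
  set p := pos u0 i.-1.
  have hpn : p < n by apply: pos_lt.
  set alt := if i.-1 == 0 then p.+1 %% n else if p == 1 then 2 else 1.
  have halt : alt < n.
    rewrite /alt; case: ifP => _; [exact: ltn_pmod n0 | case: ifP => _; lia].
  have hne : alt != p.
    rewrite /alt; case: ifP => _; last first.
      by case: (eqVneq p 1) => e; [rewrite e | rewrite eq_sym].
    rewrite modS //; case: (eqVneq p.+1 n) => e; last by rewrite eq_sym ltn_eqF.
    apply/eqP; lia.
  have halt0 : 0 < i.-1 -> alt != 0.
    by rewrite /alt; case: (eqVneq i.-1 0) => e; [lia | case: ifP].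
  set c := fun m => if m < i.-1 then pos u0 m else if m == i.-1 then alt
                    else if m <= k.-1 then 1 else 0.
  have hvf : vfun k.-1 c.
    split; first lia.
    - move=> m; rewrite /c; case: ifP => _; first exact: pos_lt.
      case: ifP => _ //; case: ifP => _; lia.
    - move=> m hm; rewrite /c; case: ifP => h1; first lia.
      case: (eqVneq m i.-1) => h2; first lia.
      case: ifP => h3 //; lia.
    - move=> m hm; rewrite /c; case: ifP => h1; first by apply: pos_nz; lia.
      case: (eqVneq m i.-1) => h2; first by apply: halt0; lia.
      case: ifP => h3 //; lia.
  have [r [hr1 hr2]] := exV hvf.
  exists r; split.
    rewrite inE hr1 hr2 eqxx /c /=.
    have -> : (k.-1 < i.-1) = false by lia.
    by case: (eqVneq k.-1 i.-1) => e; [lia | rewrite leqnn].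
  exists ((S c i.-1 k.-1).+1 + cd n p alt) => w hw hpre.
  have hpw : pos w i.-1 = p by apply: hpre; lia.
  have key : F r w = S (pos w) i (lay w) + ((S c i.-1 k.-1).+1 + cd n p alt) + dh n (pos w i).
    have e1 : i.-1 <= lay w by lia.
    have e2 : forall m, m < i.-1 -> pos w m = c m.
      by move=> m hm; rewrite hpre /c ?hm //; lia.
    have e3 : pos w i.-1 != c i.-1 by rewrite hpw /c ltnn eqxx eq_sym.
    rewrite /F (@Fq_cext (pos r) c) // (Fq_probe e1 e2 e3).
    have e4 : i.-1 < lay w by lia.
    rewrite (S_recl (pos w) e4) prednK //.
    rewrite hpw /c ltnn eqxx; lia.
  split => h; rewrite key /dh //.
  by rewrite h cd_xx //; lia.
- have hb' : i = 0 \/ x != 0.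
    case: (posnP i) => h; first by left.
    by right; apply/negP => /eqP ex; move: hb; rewrite ex h.
  set c := fun m => if m < i then pos u0 m else if m == i then x
                    else if m <= k.-1 then 1 else 0.
  have hvf : vfun k.-1 c.
    split; first lia.
    - move=> m; rewrite /c; case: ifP => _; first exact: pos_lt.
      case: ifP => _ //; case: ifP => _; lia.
    - move=> m hm; rewrite /c; case: ifP => h1; first lia.
      case: (eqVneq m i) => h2; first lia.
      case: ifP => h3 //; lia.
    - move=> m hm; rewrite /c; case: ifP => h1; first by apply: pos_nz; lia.
      case: (eqVneq m i) => h2; last by case: ifP => h3 //; lia.
      case: hb' => h; [lia | by []].
  have [r [hr1 hr2]] := exV hvf.
  exists r; split.
    rewrite inE hr1 hr2 eqxx /c /=.
    have -> : (k.-1 < i) = false by lia.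
    case: (eqVneq k.-1 i) => e; last by rewrite leqnn.
    case: hp => h; first lia.
    case: hb' => h'; [lia | apply/eqP; move/eqP: h'; lia].
  exists (S c i k.-1) => w hw hpre.
  have hci : c i = x by rewrite /c ltnn eqxx.
  rewrite /F (@Fq_cext (pos r) c) //; split => hx'.
  - rewrite (@Fq_probe c _ _ i) ?hci //.
    by move=> m hm; rewrite hpre /c ?hm.
  - apply: Fq_probe_le => //.
    + have := lay_lt w; lia.
    + move=> m hm; case: (ltngtP m i) => e.
      * by rewrite hpre /c ?e.
      * lia.
      * by rewrite e hx' hci.
    + by move=> m; rewrite -hr2; apply: pos_lt.
    + exact: pos_lt.
Qed.


Lemma resolvingP (R : {set V}) : resolving E R <->
  (forall u v, (forall r, r \in R -> dist E u r = dist E v r) -> u = v).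
Proof.
split.
- move=> /forallP H u v h; have /forallP /(_ v) /implyP H2 := H u.
  apply/eqP; apply: H2; apply/forall_inP => r hr; apply/eqP; exact: h.
- move=> H; apply/forallP => u; apply/forallP => v; apply/implyP => /forall_inP h.
  apply/eqP; apply: H => r hr; apply/eqP; exact: h.
Qed.

Lemma Lm_res u v : (forall r, r \in Lm -> F r u = F r v) -> u = v.
Proof.
move=> H; wlog huv : u v H / lay u <= lay v.
  move=> W; case: (leqP (lay u) (lay v)) => h; first exact: W.
  symmetry; apply: W; [move=> r hr; symmetry; exact: H | lia].
have [i1 i2 i3] := jf_spec (pos v) (lay u) (pos u).
set i := jf (pos v) (lay u) (pos u) in i1 i2 i3.
have hiv : i <= lay v by lia.
have hang : forall m, m < i -> pos v m = pos u m by move=> m hm; rewrite i2.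
set a := pos u i; set b := pos v i.
set hu := S (pos u) i (lay u); set hv := S (pos v) i (lay v).
have cmp : forall x, x < n -> (i < k.-1 \/ x <= 1) ->
   [/\ a != x -> b != x -> hu + cd n a x = hv + cd n b x,
       a = x -> b != x -> hv + cd n b x <= hu &
       b = x -> a != x -> hu + cd n a x <= hv].
  move=> x hx hp; have [r [hr [K HK]]] := probe i1 hx hp.
  have [Hu1 Hu2] := HK u i1 (fun m _ => erefl).
  have [Hv1 Hv2] := HK v hiv hang.
  have e := H r hr.
  split => h1 h2.
  - have := Hu1 h1; have := Hv1 h2; rewrite -/a -/b -/hu -/hv; lia.
  - have := Hu2 h1; have := Hv1 h2; rewrite -/a -/b -/hu -/hv; lia.
  - have := Hu1 h2; have := Hv2 h1; rewrite -/a -/b -/hu -/hv; lia.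
have han : a < n by apply: pos_lt.
have hbn : b < n by apply: pos_lt.
case: (eqVneq a b) => hab.
- have ei : i = lay u.
    case: (ltnP i (lay u)) => h; last lia.
    by move: (i3 h); rewrite -/a -/b hab eqxx.
  case: (ltngtP (lay u) (lay v)) => hl; last first.
  + apply: V_ext; first exact: hl.
    move=> m; case: (ltngtP m i) => e.
    * exact: i2.
    * rewrite !pos_hi //; lia.
    * by rewrite e.
  + lia.
  + exfalso; have hik : i < k.-1 by have := lay_lt v; lia.
    set x := if a == 1 then 2 else 1.
    have hx : x < n by rewrite /x; case: ifP => _; lia.
    have hax : a != x.
      rewrite /x; case: (eqVneq a 1) => e; first by rewrite e.
      by [].
    have hbx : b != x by rewrite -hab.
    have [c1 _ _] := cmp x hx (or_introl hik).
    have := c1 hax hbx.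
    have hu0 : hu = 0 by rewrite /hu ei S_nil.
    have hv1 : 0 < hv by have := S_ge (pos v) (i:=i) (j:=lay v); rewrite /hv; lia.
    rewrite hab; lia.
- exfalso; case: (ltnP i k.-1) => hik.
  + have [_ c2 _] := cmp a han (or_introl hik).
    have [_ _ c3] := cmp b hbn (or_introl hik).
    have h1 : hv + cd n b a <= hu by apply: c2 => //; rewrite eq_sym.
    have h2 := c3 erefl hab.
    have hcd : cd n a b != 0.
      by apply/eqP => e; move: hab; rewrite (cd_eq0 n3 han hbn e) eqxx.
    move: h1 h2 hcd; rewrite (cd_sym n3 b a); lia.
  + have hlu : lay u = i by have := lay_lt v; lia.
    have hlv : lay v = i by have := lay_lt v; lia.
    have hu0 : hu = 0 by rewrite /hu hlu S_nil.
    have hv0 : hv = 0 by rewrite /hv hlv S_nil.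
    have eqx : forall x, x <= 1 -> cd n a x = cd n b x.
      move=> x hx1; have hxn : x < n by lia.
      have [c1 c2 c3] := cmp x hxn (or_intror hx1).
      case: (eqVneq a x) => ea; case: (eqVneq b x) => eb.
      * by rewrite ea eb.
      * have := c2 ea eb; rewrite hu0 hv0 => h.
        have e : cd n b x = 0 by lia.
        by move: eb; rewrite (cd_eq0 n3 hbn hxn e) eqxx.
      * have := c3 eb ea; rewrite hu0 hv0 => h.
        have e : cd n a x = 0 by lia.
        by move: ea; rewrite (cd_eq0 n3 han hxn e) eqxx.
      * have := c1 ea eb; lia.
    move: hab; rewrite (cyc_res n3 han hbn (eqx 0 erefl) (eqx 1 erefl)) eqxx //.
Qed.


Lemma Lm_resolving : resolving E Lm.
Proof.
apply/resolvingP => u v h; apply: Lm_res => r hr.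
have [h1 h2] := Lm_ok hr.
by rewrite -(distF h1 h2 u) -(distF h1 h2 v) h.
Qed.

Lemma F_leaf (z z' : V) (r : V) : lay z = k.-1 -> lay z' = k.-1 ->
  (forall m, m < k.-1 -> pos z m = pos z' m) ->
  dh n (pos z k.-1) = dh n (pos z' k.-1) ->
  ~ (lay r = k.-1 /\ forall m, m < k.-1 -> pos r m = pos z m) ->
  F z r = F z' r.
Proof.
move=> hz hz' hpre hdh hnl.
have [j1 j2 j3] := jf_spec (pos z) (lay r) (pos r).
rewrite /F /Fq; set j := jf (pos z) (lay r) (pos r) in j1 j2 j3 *.
have hlr := lay_lt r.
have hjk : j < k.-1.
  case: (ltnP j k.-1) => // h; exfalso; apply: hnl; split; first lia.
  by move=> m hm; apply: j2; lia.
have ej : jf (pos z') (lay r) (pos r) = j.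
  apply: jf_eq => //.
  - by move=> m hm; rewrite -hpre ?j2 //; lia.
  - by move=> hh; rewrite -hpre //; apply: j3.
rewrite ej -hpre //.
have hk : k.-1 = (k.-2).+1 by lia.
rewrite hk !S_recr; try lia.
rewrite -hk hdh (@S_ext (pos z) (pos z') j k.-2) // => m hm; apply: hpre; lia.
Qed.

Lemma lower (R : {set V}) : resolving E R -> #|Lm| <= #|R|.
Proof.
move=> /resolvingP hR.
pose phi (r : V) := insubd r (mkP k.-1 (fun i => if i == k.-1 then 1 else pos r i)).
have hcov : forall z, z \in Lm -> exists2 r, r \in R &
    lay r = k.-1 /\ forall m, m < k.-1 -> pos r m = pos z m.
  move=> z hz; have [hz1 hz2] := Lm_ok hz.
  have hz1' : pos z k.-1 = 1 by move: hz; rewrite inE => /andP [_ /eqP].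
  have hvf : vfun k.-1 (fun i => if i == k.-1 then n.-1 else pos z i).
    split; first lia.
    - by move=> i; case: ifP => _; [lia | apply: pos_lt].
    - by move=> i hi; case: ifP => e; [move/eqP: e; lia | apply: pos_hi; rewrite hz1].
    - move=> i hi; case: ifP => e; first by move/eqP: e; lia.
      by apply: pos_nz; rewrite hz1.
  have [z' [hz'1 hz'2]] := exV hvf.
  case: (pickP [pred r | (r \in R) && ((lay r == k.-1) &&
            [forall m : 'I_k.-1, pos r m == pos z m])]) => [r /andP [hr /andP [/eqP h1 /forallP h2]] | hno].
    exists r => //; split => // m hm; exact: (eqP (h2 (Ordinal hm))).
  exfalso.
  have hzz : z = z'.
    apply: hR => r hr.
    rewrite (dist_sym E_sym) (distF hz1 hz2) (dist_sym E_sym z').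
    have hz'k : pos z' k.-1 != 0 by rewrite hz'2 eqxx; lia.
    rewrite (distF hz'1 hz'k); apply: F_leaf => //.
    - by move=> m hm; rewrite hz'2; case: eqP => // e; lia.
    - by rewrite hz'2 eqxx hz1' dh1 // dhn1.
    - case=> h1 h2; have := hno r; rewrite /= hr h1 eqxx /=.
      have -> : [forall m : 'I_k.-1, pos r m == pos z m] by apply/forallP => m; rewrite h2.
      by [].
  have := hz'2 k.-1; rewrite -hzz hz1' eqxx; lia.
have hsub : Lm \subset phi @: R.
  apply/subsetP => z hz; have [r hr [h1 h2]] := hcov z hz.
  have [hz1 _] := Lm_ok hz.
  have hz1' : pos z k.-1 = 1 by move: hz; rewrite inE => /andP [_ /eqP].
  apply/imsetP; exists r => //.
  have hvf : vfun k.-1 (fun i => if i == k.-1 then 1 else pos r i).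
    split; first lia.
    - by move=> i; case: ifP => _; [lia | apply: pos_lt].
    - by move=> i hi; case: ifP => e; [move/eqP: e; lia | apply: pos_hi; rewrite h1].
    - move=> i hi; case: ifP => e; first by [].
      by apply: pos_nz; rewrite h1.
  have [p1 p2] := insubd_mkP r hvf.
  apply: V_ext; first by rewrite p1 hz1.
  move=> m; rewrite p2; case: (eqVneq m k.-1) => e; first by rewrite e hz1'.
  case: (ltngtP m k.-1) => e2.
  - by rewrite h2.
  - by rewrite !pos_hi ?h1 ?hz1.
  - by move: e; rewrite e2 eqxx.
exact: leq_trans (subset_leq_card hsub) (leq_imset_card _ _).
Qed.

Lemma n1 : 0 < n - 1. Proof. lia. Qed.
Definition oN (x : nat) : 'I_(n - 1) := Ordinal (ltn_pmod x n1).

Lemma card_Lm : #|Lm| = n * (n - 1) ^ (k - 2).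
Proof.
have [z0 _] : exists z0 : V, True.
  have hvf : vfun 0 (fun _ => 0).
    split => //; [lia | move=> i; exact: n0 | move=> i hi; lia].
  by have [w _] := exV hvf; exists w.
pose D := ('I_n * {ffun 'I_(k - 2) -> 'I_(n - 1)})%type.
pose g (d : D) (m : nat) : nat :=
  if m == 0 then nat_of_ord d.1 else if m < k.-1 then
    (if (insub m.-1 : option 'I_(k - 2)) is Some o then (nat_of_ord (d.2 o)).+1 else 0)
  else if m == k.-1 then 1 else 0.
have hvf : forall d, vfun k.-1 (g d).
  move=> d; split; first lia.
  - move=> m; rewrite /g; case: ifP => _; first exact: ltn_ord.
    case: ifP => _.
      case: insubP => [o _ _|_]; last lia.
      have := ltn_ord (d.2 o); lia.
    case: ifP => _; lia.
  - move=> m hm; rewrite /g; case: ifP => e1; first by move/eqP: e1; lia.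
    case: ifP => e2; first lia.
    by case: ifP => e3 //; move/eqP: e3; lia.
  - move=> m hm; rewrite /g; case: ifP => e1; first by move/eqP: e1; lia.
    case: ifP => e2; last lia.
    case: insubP => [o _ _|hn] //.
    by move: hn; rewrite ltnNge => /negPn; lia.
pose psi (d : D) := insubd z0 (mkP k.-1 (g d)).
have hpsi : forall d, lay (psi d) = k.-1 /\ forall m, pos (psi d) m = g d m.
  by move=> d; apply: insubd_mkP.
have psi_inj : injective psi.
  move=> [a1 f1] [a2 f2] e.
  have G : forall m, g (a1, f1) m = g (a2, f2) m.
    by move=> m; have [_ p1] := hpsi (a1, f1); have [_ p2] := hpsi (a2, f2); rewrite -p1 -p2 e.
  congr pair.
  - by apply: val_inj; have := G 0.
  - apply/ffunP => o; apply: val_inj.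
    have := G o.+1; rewrite /g /=.
    have -> : (o.+1 < k.-1) = true by have := ltn_ord o; lia.
    by rewrite valK => -[].
have -> : Lm = psi @: [set: D].
  apply/setP => z; apply/idP/idP.
  - move=> hz; have [hz1 _] := Lm_ok hz.
    have hz1' : pos z k.-1 = 1 by move: hz; rewrite inE => /andP [_ /eqP].
    apply/imsetP; exists (oI (pos z 0), [ffun o : 'I_(k - 2) => oN (pos z o.+1).-1]) => //.
    have [p1 p2] := hpsi (oI (pos z 0), [ffun o : 'I_(k - 2) => oN (pos z o.+1).-1]).
    apply: V_ext; first by rewrite hz1 p1.
    move=> m; rewrite p2 /g /=.
    case: (eqVneq m 0) => e1.
      by rewrite e1 modn_small //; apply: pos_lt.
    case: ifP => e2.
      case: insubP => [o _ ho|hn]; last by move: hn; rewrite ltnNge => /negPn; lia.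
      rewrite ffunE /= ho prednK; last lia.
      have hnz : 0 < pos z m by rewrite lt0n; apply: pos_nz; rewrite hz1; lia.
      have hlt := pos_lt z m.
      rewrite modn_small ?prednK //; lia.
    case: (eqVneq m k.-1) => e3; first by rewrite e3 hz1'.
    rewrite pos_hi // hz1; lia.
  - case/imsetP => d _ ->; have [p1 p2] := hpsi d.
    rewrite inE p1 p2 eqxx /g /=.
    have -> : (k.-1 == 0) = false by apply/eqP; lia.
    by rewrite ltnn eqxx.
rewrite card_imset // cardsT card_prod card_ffun !card_ord.
by [].
Qed.

Lemma metric_dim_Lm : metric_dim E = #|Lm|.
Proof.
rewrite /metric_dim.
have hT : resolving E [set: V].
  apply/resolvingP => u v h; apply: Lm_res => r hr.
  have [h1 h2] := Lm_ok hr.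
  by rewrite -(distF h1 h2 u) -(distF h1 h2 v) h // inE.
case: arg_minnP => // R hR hmin.
apply/eqP; rewrite eqn_leq (hmin _ Lm_resolving) andTb.
exact: lower.
Qed.
End LCG.

Theorem theorem3 (n k : nat) :
  3 <= n -> 2 <= k ->
  metric_dim (lcg_rel n k) = n * (n - 1) ^ (k - 2).
Proof.
move=> hn hk; rewrite (metric_dim_Lm hn hk); exact: card_Lm.
Qed.

Print Assumptions theorem3.
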